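(* Let $\phi$ be a propositional team formula (built from literals $p,\neg p$, the constant $\bot$, the constant $NE$, dependence atoms $=\!(\overline\alpha,\beta)$, inclusion atoms $\overline\alpha\subseteq\overline\alpha'$ and independence atoms $\overline\alpha\perp\overline\beta$ over classical propositional formulas, using $\wedge,\otimes,\vee,\circledast$), let $p\in Prop$, and suppose $\phi$ is downward closed. Then $\phi\models \phi[p|\top]\otimes\phi[p|\bot]$, i.e. every team satisfying $\phi$ satisfies $\phi[p|\top]\otimes\phi[p|\bot]$.
   Context: $Prop$ is a nonempty set of propositional letters. A team is a set $X$ of valuations $s:Prop\to\{0,1\}$. Semantics: $X\models\bot$ iff $X=\emptyset$; $X\models p$ iff $s(p)=1$ for all $s\in X$; $X\models\neg p$ iff $s(p)=0$ for all $s\in X$; $X\models NE$ iff $X\neq\emptyset$; $X\models\phi_1\wedge\phi_2$ iff $X\models\phi_1$ and $X\models\phi_2$; $X\models\phi_1\otimes\phi_2$ iff there are $X_1,X_2$ with $X=X_1\cup X_2$, $X_1\models\phi_1$, $X_2\models\phi_2$; $X\models\phi_1\vee\phi_2$ iff $X\models\phi_1$ or $X\models\phi_2$; $X\models\phi_1\circledast\phi_2$ iff $X=\emptyset$ or there are nonempty $X_1,X_2$ with $X=X_1\cup X_2$, $X_1\models\phi_1$, $X_2\models\phi_2$. For classical propositional formulas $\alpha$, $s(\alpha)\in\{0,1\}$ is the usual truth value and $s(\overline\alpha)$ the tuple of values; $X\models{=}(\overline\alpha,\beta)$ iff for all $s,s'\in X$, $s(\overline\alpha)=s'(\overline\alpha)$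 implies $s(\beta)=s'(\beta)$; $X\models\overline\alpha\subseteq\overline\alpha'$ iff for every $s\in X$ there is $s'\in X$ with $s(\overline\alpha)=s'(\overline\alpha')$; $X\models\overline\alpha\perp\overline\beta$ iff for all $s,s'\in X$ there is $s''\in X$ with $s''(\overline\alpha)=s(\overline\alpha)$ and $s''(\overline\beta)=s'(\overline\beta)$. $\top$ denotes $q\otimes\neg q$ for a letter $q$ (true in every team). The substitution $\phi[p|\top]$ is defined inductively: $p\mapsto\top$, $\neg p\mapsto\bot$, $\bot\mapsto\bot$, other literals and $NE$ unchanged, commuting with all connectives, and inside atoms the classical formulas are substituted classically ($p$ replaced by a true constant); $\phi[p|\bot]$ is analogous with $p\mapsto\bot$, $\neg p\mapsto\top$. A formula $\phi$ is downward closed if $X\models\phi$ and $Y\subseteq X$ imply $Y\models\phi$. *)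

(* Defs.v *)
From Stdlib Require Import List Bool Classical ClassicalEpsilon.
Import ListNotations.
Set Implicit Arguments.

Section TeamLogic.
Variable L : Type.

Definition valuation := L -> bool.
Definition team := valuation -> Prop.

Inductive cform :=
| CVar : L -> cform
| CTrue : cform
| CFalse : cform
| CNeg : cform -> cform
| CAnd : cform -> cform -> cform
| COr : cform -> cform -> cform.

Fixpoint cval (s : valuation) (a : cform) : bool :=
  match a with
  | CVar p => s p
  | CTrue => true
  | CFalse => false
  | CNeg a => negb (cval s a)
  | CAnd a b => cval s a && cval s b
  | COr a b => cval s a || cval s b
  end.

Definition cvals (s : valuation) (xs : list cform) : list bool := map (cval s) xs.

Inductive tform :=
| TLit : L -> tform
| TNLit : L -> tform
| TBot : tform
| TNE : tform
| TDep : list cform -> cform -> tform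
| TInc : list cform -> list cform -> tform
| TInd : list cform -> list cform -> tform
| TAnd : tform -> tform -> tform
| TTensor : tform -> tform -> tform
| TOr : tform -> tform -> tform
| TCirc : tform -> tform -> tform.

Definition sub_team (Y X : team) := forall s, Y s -> X s.
Definition union_eq (X X1 X2 : team) := forall s, X s <-> (X1 s \/ X2 s).
Definition empty_team (X : team) := forall s, ~ X s.

Fixpoint sat (X : team) (f : tform) : Prop :=
  match f with
  | TLit p => forall s, X s -> s p = true
  | TNLit p => forall s, X s -> s p = false
  | TBot => empty_team X
  | TNE => exists s, X s
  | TDep xs b => forall s s', X s -> X s' -> cvals s xs = cvals s' xs ->
                  cval s b = cval s' b
  | TInc xs ys => forall s, X s -> exists s', X s' /\ cvals s xs = cvals s' ys
  | TInd xs ys => forall s s', X s -> X s' -> exists s'', X s'' /\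
                  cvals s'' xs = cvals s xs /\ cvals s'' ys = cvals s' ys
  | TAnd f g => sat X f /\ sat X g
  | TTensor f g => exists X1 X2, union_eq X X1 X2 /\ sat X1 f /\ sat X2 g
  | TOr f g => sat X f \/ sat X g
  | TCirc f g => empty_team X \/
      exists X1 X2, (exists s, X1 s) /\ (exists s, X2 s) /\
        union_eq X X1 X2 /\ sat X1 f /\ sat X2 g
  end.

Definition downward_closed (f : tform) : Prop :=
  forall X Y : team, sat X f -> sub_team Y X -> sat Y f.

Definition entails (f g : tform) : Prop := forall X : team, sat X f -> sat X g.

Definition leq_dec (a b : L) : {a = b} + {a <> b} :=
  excluded_middle_informative (a = b).

Fixpoint csubst (p : L) (c : cform) (a : cform) : cform :=
  match a with
  | CVar r => if leq_dec r p then c else CVar r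
  | CTrue => CTrue
  | CFalse => CFalse
  | CNeg a => CNeg (csubst p c a)
  | CAnd a b => CAnd (csubst p c a) (csubst p c b)
  | COr a b => COr (csubst p c a) (csubst p c b)
  end.

Definition ttop (q : L) : tform := TTensor (TLit q) (TNLit q).

(* phi[p|top] (b = true) and phi[p|bot] (b = false), with top = q (x) ~q *)
Fixpoint tsubst (q p : L) (b : bool) (f : tform) : tform :=
  let c := if b then CTrue else CFalse in
  match f with
  | TLit r => if leq_dec r p then (if b then ttop q else TBot) else TLit r
  | TNLit r => if leq_dec r p then (if b then TBot else ttop q) else TNLit r
  | TBot => TBot
  | TNE => TNE
  | TDep xs y => TDep (map (csubst p c) xs) (csubst p c y)
  | TInc xs ys => TInc (map (csubst p c) xs) (map (csubst p c) ys)
  | TInd xs ys => TInd (map (csubst p c) xs) (map (csubst p c) ys)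
  | TAnd f g => TAnd (tsubst q p b f) (tsubst q p b g)
  | TTensor f g => TTensor (tsubst q p b f) (tsubst q p b g)
  | TOr f g => TOr (tsubst q p b f) (tsubst q p b g)
  | TCirc f g => TCirc (tsubst q p b f) (tsubst q p b g)
  end.

End TeamLogic.

(* Main.v *)
Require Import Defs.
From Stdlib Require Import List Bool Classical ClassicalEpsilon.

Lemma cval_csubst (L : Type) (p : L) (b : bool) (s : valuation L) (a : cform L) :
  s p = b -> cval s (csubst p (if b then CTrue L else CFalse L) a) = cval s a.
Proof.
  intro Hb; induction a; simpl; try congruence.
  - destruct (leq_dec l p); subst; simpl; destruct (s p); reflexivity.
Qed.

Lemma cvals_csubst (L : Type) (p : L) (b : bool) (s : valuation L) xs :
  s p = b -> cvals s (map (csubst p (if b then CTrue L else CFalse L)) xs) = cvals s xs.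
Proof.
  intro Hb; induction xs; simpl; auto.
  unfold cvals in *; simpl; rewrite IHxs, cval_csubst; auto.
Qed.

Lemma key (L : Type) (q p : L) (b : bool) (f : tform L) :
  forall Y : team L, (forall s, Y s -> s p = b) -> sat Y f -> sat Y (tsubst q p b f).
Proof.
  induction f; intros Y HY H; simpl in *.
  - destruct (leq_dec l p).
    + subst. destruct b.
      * exists (fun s => Y s /\ s q = true), (fun s => Y s /\ s q = false).
        split; [|split]; simpl.
        -- intro s; destruct (s q) eqn:E; intuition; discriminate.
        -- intros s [_ h]; exact h.
        -- intros s [_ h]; exact h.
      * intros s Hs. specialize (H s Hs). specialize (HY s Hs). congruence.
    + exact H.
  - destruct (leq_dec l p).
    + subst. destruct b.
      * intros s Hs. specialize (H s Hs). specialize (HY s Hs). congruence.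
      * exists (fun s => Y s /\ s q = true), (fun s => Y s /\ s q = false).
        split; [|split]; simpl.
        -- intro s; destruct (s q) eqn:E; intuition; discriminate.
        -- intros s [_ h]; exact h.
        -- intros s [_ h]; exact h.
    + exact H.
  - exact H.
  - exact H.
  - intros s s' Hs Hs' E.
    rewrite !cval_csubst by auto.
    rewrite !cvals_csubst in E by auto.
    apply H; auto.
  - intros s Hs. destruct (H s Hs) as [s' [Hs' E]].
    exists s'; split; auto.
    rewrite !cvals_csubst by auto. exact E.
  - intros s s' Hs Hs'. destruct (H s s' Hs Hs') as [s'' [Hs'' [E1 E2]]].
    exists s''; split; auto.
    rewrite !cvals_csubst by auto. auto.
  - destruct H; split; auto.
  - destruct H as [X1 [X2 [U [H1 H2]]]].
    exists X1, X2; split; [exact U|split].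
    + apply IHf1; auto. intros s Hs; apply HY, U; auto.
    + apply IHf2; auto. intros s Hs; apply HY, U; auto.
  - destruct H; [left|right]; auto.
  - destruct H as [H|[X1 [X2 [N1 [N2 [U [H1 H2]]]]]]]; [left; exact H|right].
    exists X1, X2; split; [exact N1|split; [exact N2|split; [exact U|split]]].
    + apply IHf1; auto. intros s Hs; apply HY, U; auto.
    + apply IHf2; auto. intros s Hs; apply HY, U; auto.
Qed.

Theorem mainTheorem1 (L : Type) (q p : L) (phi : tform L) :
  downward_closed phi ->
  entails phi (TTensor (tsubst q p true phi) (tsubst q p false phi)).
Proof.
  intros D X H. simpl.
  exists (fun s => X s /\ s p = true), (fun s => X s /\ s p = false).
  split; [|split].
  - intro s; destruct (s p) eqn:E; intuition; discriminate.
  - apply key. { intros s [_ h]; exact h. }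
    apply (D X); auto. intros s [h _]; exact h.
  - apply key. { intros s [_ h]; exact h. }
    apply (D X); auto. intros s [h _]; exact h.
Qed.
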